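(* Let $R$ be a ring and $G$ a group such that the group ring $RG$ is a DT ring. Then $1-g^2\in\Delta(RG)$ for every $g\in G$.
   Context: All rings are associative with identity; $U(R)$ is the group of units. $\Delta(R)=\{x\in R: x+u\in U(R)\text{ for all }u\in U(R)\}$. $\mathrm{Tr}(R)=\{x\in R: x^3=x\}$. A ring $R$ is a DT ring if every $r\in R$ can be written $r=e+d$ with $e\in\mathrm{Tr}(R)$ and $d\in\Delta(R)$. $RG$ denotes the group ring. *)

(* Defs.v *)
(* The group ring RG of an arbitrary (possibly infinite,
   possibly non-abelian) group G over an arbitrary ring R is defined as the
   finitely supported functions G -> R (finmap's fsfun with default 0), with
   the usual convolution product. *)
From HB Require Import structures.
From mathcomp Require Import all_boot all_order all_algebra.
From mathcomp Require Import finmap.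
Set Implicit Arguments. Unset Strict Implicit. Unset Printing Implicit Defensive.
Import GRing.Theory.
Local Open Scope ring_scope.
Local Open Scope fset_scope.

Section GroupRing.
Variables (R : pzRingType) (G : groupType).

Definition grpring := {fsfun G -> R with 0}.

Definition gr_add (a b : grpring) : grpring :=
  [fsfun g in finsupp a `|` finsupp b => (a g + b g)%R].

Definition gr_opp (a : grpring) : grpring :=
  [fsfun g in finsupp a => (- a g)%R].

(* (a b)(x) = sum_{g h = x} a(g) b(h) = sum_{g in supp a} a(g) b(g^-1 x) *)
Definition gr_mul (a b : grpring) : grpring :=
  [fsfun x in [fset (g * h)%g | g in finsupp a, h in finsupp b] =>
     (\sum_(g <- finsupp a) a g * b (g^-1 * x)%g)%R].

Definition gr_of (r : R) (g : G) : grpring :=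
  [fsfun x in [fset g] => if x == g then r else 0].

Definition gr_one : grpring := gr_of 1 1%g.

Definition gr_sub (a b : grpring) : grpring := gr_add a (gr_opp b).

Definition gr_unit (u : grpring) : Prop :=
  exists v, gr_mul u v = gr_one /\ gr_mul v u = gr_one.

Definition gr_Delta (x : grpring) : Prop :=
  forall u, gr_unit u -> gr_unit (gr_add x u).

Definition gr_Tr (x : grpring) : Prop := gr_mul x (gr_mul x x) = x.

Definition gr_DT : Prop :=
  forall r : grpring, exists e d, gr_Tr e /\ gr_Delta d /\ r = gr_add e d.

End GroupRing.

(* Main.v *)
Require Import Defs.
From HB Require Import structures.
From mathcomp Require Import all_boot all_order all_algebra.
From mathcomp Require Import finmap.
Set Implicit Arguments. Unset Strict Implicit. Unset Printing Implicit Defensive.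
Import GRing.Theory.
Local Open Scope fset_scope.
Local Open Scope ring_scope.

Section GR.
Variables (R : pzRingType) (G : groupType).
Implicit Types (a b c : grpring R G).

Lemma gr_addE a b x : gr_add a b x = a x + b x.
Proof.
rewrite /gr_add fsfun_fun inE; case: finsuppP => Ha; case: finsuppP => //= Hb.
by rewrite addr0.
Qed.

Lemma gr_oppE a x : gr_opp a x = - a x.
Proof. by rewrite /gr_opp fsfun_fun; case: finsuppP => //; rewrite oppr0. Qed.

Lemma gr_ofE (r : R) (g x : G) : gr_of r g x = if x == g then r else 0.
Proof. by rewrite /gr_of fsfun_fun inE; case: eqP. Qed.

Lemma gr_mulE0 a b x :
  gr_mul a b x = \sum_(g <- finsupp a) a g * b (g^-1 * x)%g.
Proof.
rewrite /gr_mul fsfun_fun; case: ifPn => // Hx.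
rewrite big1_fset // => g Hg _.
case: (finsuppP b (g^-1 * x)%g); first by rewrite mulr0.
move=> Hh; case/negP: Hx; apply/imfset2P.
exists g => //; exists (g^-1 * x)%g => //.
by rewrite mulVKg.
Qed.

Lemma eq_mulgl (g h x : G) : ((g * h)%g == x) = (h == (g^-1 * x)%g).
Proof. by apply/eqP/eqP => [<-|->]; rewrite ?mulKg ?mulVKg. Qed.

Lemma sum_ind (T : {fset G}) (F : G -> R) (y : G) :
  (y \notin T -> F y = 0) ->
  \sum_(h <- T) (if h == y then F h else 0) = F y.
Proof.
move=> Hy; case: (boolP (y \in T)) => yT.
  rewrite (big_fsetD1 y yT) /= eqxx big1_fset ?addr0 // => h.
  by rewrite !inE => /andP[/negPf -> _].
rewrite Hy // big1_fset // => h hT _; case: eqP => // hy.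
by move: yT; rewrite -hy hT.
Qed.

Lemma gr_mulE a b (S T : {fset G}) x :
  finsupp a `<=` S -> finsupp b `<=` T ->
  gr_mul a b x = \sum_(g <- S) \sum_(h <- T)
     (if (g * h)%g == x then a g * b h else 0).
Proof.
move=> Sa Tb; rewrite gr_mulE0 (big_fset_incl _ Sa); last first.
  by move=> g _ /fsfun_dflt ->; rewrite mul0r.
apply: eq_bigr => g _.
under eq_bigr => h _ do rewrite eq_mulgl.
rewrite sum_ind // => yT; suff -> : b (g^-1 * x)%g = 0 by rewrite mulr0.
apply: fsfun_dflt; apply: contra yT; exact: (fsubsetP Tb).
Qed.

Lemma finsupp_mul a b :
  finsupp (gr_mul a b) `<=` [fset (g * h)%g | g in finsupp a, h in finsupp b].
Proof.
apply/fsubsetP => x; rewrite mem_finsupp /gr_mul fsfun_fun.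
by case: ifP => //; rewrite eqxx.
Qed.

Lemma in_prod (A B : {fset G}) g h : g \in A -> h \in B ->
  (g * h)%g \in [fset (g * h)%g | g in A, h in B].
Proof. by move=> gA hB; apply/imfset2P; exists g => //; exists h. Qed.

Lemma gr_mulA a b c : gr_mul (gr_mul a b) c = gr_mul a (gr_mul b c).
Proof.
apply/fsfunP => x.
set A := finsupp a; set B := finsupp b; set C := finsupp c.
set AB := [fset (g * h)%g | g in A, h in B].
set BC := [fset (g * h)%g | g in B, h in C].
rewrite (gr_mulE x (finsupp_mul a b) (fsubset_refl C)).
rewrite (gr_mulE x (fsubset_refl A) (finsupp_mul b c)).
transitivity (\sum_(g <- A) \sum_(h <- B) \sum_(l <- C)
   (if ((g * h) * l)%g == x then a g * b h * c l else 0)).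
  transitivity (\sum_(k <- AB) \sum_(l <- C) \sum_(g <- A) \sum_(h <- B)
     (if k == (g * h)%g then (if (k * l)%g == x then a g * b h * c l else 0) else 0)).
    apply: eq_bigr => k _; apply: eq_bigr => l _.
    rewrite (gr_mulE k (fsubset_refl A) (fsubset_refl B)).
    case: eqP => kl.
      rewrite mulr_suml; apply: eq_bigr => g _.
      rewrite mulr_suml; apply: eq_bigr => h _.
      by rewrite eq_sym; case: eqP => //; rewrite mul0r.
    by rewrite big1 // => g _; rewrite big1 // => h _; case: eqP.
  rewrite exchange_big /=.
  under eq_bigr => l _ do rewrite exchange_big /=.
  under eq_bigr => l _ do under eq_bigr => g _ do rewrite exchange_big /=.
  rewrite exchange_big /=; apply: eq_big_seq => g gA.
  rewrite exchange_big /=; apply: eq_big_seq => h hB.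
  apply: eq_bigr => l _.
  by rewrite sum_ind // => /negP; case; apply: in_prod.
transitivity (\sum_(g <- A) \sum_(m <- BC) \sum_(h <- B) \sum_(l <- C)
     (if m == (h * l)%g then (if (g * m)%g == x then a g * (b h * c l) else 0) else 0)); last first.
  apply: eq_bigr => g _; apply: eq_bigr => m _.
  rewrite (gr_mulE m (fsubset_refl B) (fsubset_refl C)).
  case: eqP => gm.
    rewrite mulr_sumr; apply: eq_bigr => h _.
    rewrite mulr_sumr; apply: eq_bigr => l _.
    by rewrite eq_sym; case: eqP => //; rewrite mulr0.
  by rewrite big1 // => h _; rewrite big1 // => l _; case: eqP.
apply: eq_big_seq => g gA.
rewrite [RHS]exchange_big /=; apply: eq_big_seq => h hB.
rewrite [RHS]exchange_big /=; apply: eq_big_seq => l lC.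
by rewrite sum_ind ?mulgA ?mulrA // => /negP; case; apply: in_prod.
Qed.

Definition gr0 : grpring R G := gr_of 0 1%g.

Lemma finsupp_of (r : R) (g : G) : finsupp (gr_of r g) `<=` [fset g].
Proof. by apply/fsubsetP => y; rewrite mem_finsupp gr_ofE inE; case: (y == g) => //; rewrite eqxx. Qed.

Lemma finsupp_add a b : finsupp (gr_add a b) `<=` finsupp a `|` finsupp b.
Proof.
apply/fsubsetP => y; rewrite mem_finsupp gr_addE inE !mem_finsupp.
move=> H; apply/negPn/negP => /norP[/negPn/eqP Ha /negPn/eqP Hb]; by rewrite Ha Hb addr0 eqxx in H.
Qed.

Lemma gr_addA : associative (@gr_add R G).
Proof. by move=> a b c; apply/fsfunP => x; rewrite !gr_addE addrA. Qed.
Lemma gr_addC : commutative (@gr_add R G).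
Proof. by move=> a b; apply/fsfunP => x; rewrite !gr_addE addrC. Qed.
Lemma gr_add0 : left_id gr0 (@gr_add R G).
Proof. by move=> a; apply/fsfunP => x; rewrite !gr_addE gr_ofE if_same add0r. Qed.
Lemma gr_addN : left_inverse gr0 (@gr_opp R G) (@gr_add R G).
Proof. by move=> a; apply/fsfunP => x; rewrite !gr_addE gr_oppE gr_ofE if_same addNr. Qed.

Lemma gr_mul1 : left_id (gr_one R G) (@gr_mul R G).
Proof.
move=> a; apply/fsfunP => x.
rewrite (gr_mulE x (finsupp_of _ _) (fsubset_refl _)) big_seq_fset1.
under eq_bigr => h _ do rewrite mul1g gr_ofE eqxx mul1r.
by rewrite sum_ind // => /fsfun_dflt.
Qed.

Lemma gr_mul1r : right_id (gr_one R G) (@gr_mul R G).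
Proof.
move=> a; apply/fsfunP => x.
rewrite (gr_mulE x (fsubset_refl _) (finsupp_of _ _)).
under eq_bigr => g _ do rewrite big_seq_fset1 mulg1 gr_ofE eqxx mulr1.
by rewrite sum_ind // => /fsfun_dflt.
Qed.

Lemma gr_mulDl : left_distributive (@gr_mul R G) (@gr_add R G).
Proof.
move=> a b c; apply/fsfunP => x; rewrite gr_addE.
rewrite (gr_mulE x (finsupp_add a b) (fsubset_refl (finsupp c))).
rewrite (gr_mulE x (fsubsetUl (finsupp a) (finsupp b)) (fsubset_refl (finsupp c))).
rewrite (gr_mulE x (fsubsetUr (finsupp a) (finsupp b)) (fsubset_refl (finsupp c))).
rewrite -big_split; apply: eq_bigr => g _; rewrite -big_split; apply: eq_bigr => h _.
by rewrite gr_addE; case: eqP => _; rewrite /= ?mulrDl ?addr0.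
Qed.

Lemma gr_mulDr : right_distributive (@gr_mul R G) (@gr_add R G).
Proof.
move=> a b c; apply/fsfunP => x; rewrite gr_addE.
rewrite (gr_mulE x (fsubset_refl (finsupp a)) (finsupp_add b c)).
rewrite (gr_mulE x (fsubset_refl (finsupp a)) (fsubsetUl (finsupp b) (finsupp c))).
rewrite (gr_mulE x (fsubset_refl (finsupp a)) (fsubsetUr (finsupp b) (finsupp c))).
rewrite -big_split; apply: eq_bigr => g _; rewrite -big_split; apply: eq_bigr => h _.
by rewrite gr_addE; case: eqP => _; rewrite /= ?mulrDr ?addr0.
Qed.

Lemma gr_of_mul (g h : G) : gr_mul (gr_of (1 : R) g) (gr_of 1 h) = gr_of 1 (g * h)%g.
Proof.
apply/fsfunP => x.
rewrite (gr_mulE x (finsupp_of _ _) (finsupp_of _ _)) !big_seq_fset1 !gr_ofE !eqxx mulr1.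
by rewrite eq_sym.
Qed.
End GR.

Section Inst.
Variables (R : pzRingType) (G : groupType).
HB.instance Definition _ := Choice.copy (grpring R G) {fsfun G -> R with 0}.
HB.instance Definition _ :=
  GRing.isZmodule.Build (grpring R G) (@gr_addA R G) (@gr_addC R G)
    (@gr_add0 R G) (@gr_addN R G).
Lemma gr_mulA' : associative (@gr_mul R G).
Proof. by move=> a b c; rewrite gr_mulA. Qed.
HB.instance Definition _ :=
  GRing.Zmodule_isPzRing.Build (grpring R G) gr_mulA' (@gr_mul1 R G)
    (@gr_mul1r R G) (@gr_mulDl R G) (@gr_mulDr R G).
End Inst.

Section Abstract.
Variable T : pzRingType.
Definition un (u : T) := exists v, u * v = 1 /\ v * u = 1.
Definition De (x : T) := forall u, un u -> un (x + u).

Lemma unM a b : un a -> un b -> un (a * b).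
Proof.
move=> [a' [Ha1 Ha2]] [b' [Hb1 Hb2]]; exists (b' * a'); split.
  by rewrite mulrA -(mulrA a) Hb1 mulr1.
by rewrite mulrA -(mulrA b') Ha2 mulr1.
Qed.

Lemma unN a : un a -> un (- a).
Proof. by move=> [a' [H1 H2]]; exists (- a'); rewrite !mulrNN. Qed.

Lemma DeN x : De x -> De (- x).
Proof.
move=> Hx u Hu; have := unN (Hx _ (unN Hu)).
by rewrite opprD opprK.
Qed.

Lemma DeD x y : De x -> De y -> De (x + y).
Proof. by move=> Hx Hy u Hu; rewrite -addrA; apply: Hx; apply: Hy. Qed.

Lemma DeMl v x : un v -> De x -> De (v * x).
Proof.
move=> [w [H1 H2]] Hx u Hu.
have Hw : un w by exists v.
have -> : v * x + u = v * (x + w * u) by rewrite mulrDr mulrA H1 mul1r.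
by apply: unM; [exists w | apply: Hx; apply: unM].
Qed.

Lemma DeMr v x : un v -> De x -> De (x * v).
Proof.
move=> [w [H1 H2]] Hx u Hu.
have Hw : un w by exists v.
have -> : x * v + u = (x + u * w) * v by rewrite mulrDl -mulrA H2 mulr1.
by apply: unM; [apply: Hx; apply: unM | exists w].
Qed.

Lemma main_abs (g : T) :
  (forall r : T, exists e d, e * (e * e) = e /\ De d /\ r = e + d) ->
  un g -> De (1 - g * g).
Proof.
move=> DT Hg; have [e [d [He [Hd Hr]]]] := DT g.
have Hue : un e.
  have -> : e = - d + g by rewrite Hr addrC addrK.
  exact: (DeN Hd).
have Hee : e * e = 1.
  move: Hue => [w [H1 H2]].
  by rewrite -[e * e]mul1r -H2 -mulrA He.
have -> : 1 - g * g = - (d * e + g * d).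
  by rewrite {2}Hr mulrDr {1}Hr mulrDl Hee -addrA opprD addrA subrr add0r.
by apply: DeN; apply: DeD; [apply: DeMr | apply: DeMl].
Qed.
End Abstract.

Theorem lemma3p7 (R : pzRingType) (G : groupType) :
  gr_DT R G ->
  forall g : G, gr_Delta (gr_sub (gr_one R G) (gr_of 1%R (g * g)%g)).
Proof.
move=> DT g.
have Hg : un (gr_of (1 : R) g : grpring R G).
  exists (gr_of 1 g^-1)%g; split.
    by rewrite /GRing.mul /= gr_of_mul mulgV.
  by rewrite /GRing.mul /= gr_of_mul mulVg.
have := @main_abs (grpring R G) _ DT Hg.
by rewrite /GRing.mul /= gr_of_mul.
Qed.
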